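(* For every set $X$, both $\mathcal{PI}^{\ast}_X=(P_X,\star)$ and $\overline{\mathcal{PI}^{\ast}}_X=(P_X,\circ)$ are inverse semigroups.
   Context: Let $X$ be a set and $X'=\{x':x\in X\}$ a disjoint copy of $X$. Let $P_X$ be the set of all partitions of $X\cup X'$ each of whose blocks is either a singleton (called a point) or a generalised line, i.e. a subset meeting both $X$ and $X'$. An element is determined by its generalised lines; write $\alpha=\{A_i\cup B_i'\}_{i\in I}$, where the nonempty sets $A_i\subseteq X$ are pairwise disjoint, the nonempty sets $B_i\subseteq X$ are pairwise disjoint, $B_i'=\{b':b\in B_i\}$, and all remaining elements of $X\cup X'$ are points. Product $\star$: let $X''$ be a third copy of $X$; regard $\alpha$ as a partition of $X\cup X''$ (replacing each $x'$ by $x''$) and $\beta$ as a partition of $X''\cup X'$ (replacing each $x\in X$ by $x''$), and let $\sim$ be the smallest equivalence relation on $X\cup X''\cup X'$ containing all blocks of both. Then $\alpha\star\beta$ is the partition of $X\cup X'$ in which two distinct elements $u,v$ lie in the same block iff $u\sim v$ and the $\sim$-class of $u$ contains no singleton block of (the relabelled) $\alpha$ or $\beta$. Product $\circ$: $\alpha\circ\beta$ is the element of $P_X$ whose generalised lines are exactly the sets $A\cup D'$ such that $A\cup B'$ is a generalised line of $\alpha$ and $B\cup D'$ is a generalised line of $\beta$ for the same set $B$; all other elements are points. *)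

(* Defs.v *)
(* Partitions of X ∪ X' are represented as equivalence
   relations on the sum type X + X (inl x = x ∈ X, inr x = x' ∈ X'). *)
From Stdlib Require Import Relations Relation_Operators.

Section PX.
Variable X : Type.

Definition T2 := (X + X)%type.
Definition prel := T2 -> T2 -> Prop.

Definition req (R S : prel) : Prop := forall u v, R u v <-> S u v.

Definition is_point (R : prel) (u : T2) : Prop := forall v, R u v -> v = u.

Definition is_genline_at (R : prel) (u : T2) : Prop :=
  (exists a, R u (inl a)) /\ (exists b, R u (inr b)).

Definition isPX (R : prel) : Prop :=
  equivalence T2 R /\ forall u, is_point R u \/ is_genline_at R u.

(* three copies X, X'', X' *)
Inductive T3 : Type := Top (x : X) | Mid (x : X) | Bot (x : X).

Definition embA (p : T2) : T3 := match p with inl x => Top x | inr x => Mid x end.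
Definition embB (p : T2) : T3 := match p with inl x => Mid x | inr x => Bot x end.
Definition embC (p : T2) : T3 := match p with inl x => Top x | inr x => Bot x end.

Definition relA (R : prel) (u v : T3) : Prop :=
  exists p q, u = embA p /\ v = embA q /\ R p q.
Definition relB (S : prel) (u v : T3) : Prop :=
  exists p q, u = embB p /\ v = embB q /\ S p q.

Definition sim (R S : prel) : T3 -> T3 -> Prop :=
  clos_refl_sym_trans T3 (fun u v => relA R u v \/ relB S u v).

Definition is_point3 (R S : prel) (w : T3) : Prop :=
  (exists p, w = embA p /\ is_point R p) \/ (exists p, w = embB p /\ is_point S p).

Definition star (R S : prel) : prel := fun u v =>
  u = v \/
  (sim R S (embC u) (embC v) /\ forall w, sim R S (embC u) w -> ~ is_point3 R S w).

(* circ: generalised lines A ∪ D' with A ∪ B' a line of R (block of w1)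
   and B ∪ D' a line of S (block of w2), same B *)
Definition circ_line (R S : prel) (w1 w2 : T2) : Prop :=
  is_genline_at R w1 /\ is_genline_at S w2 /\
  (forall b, R w1 (inr b) <-> S w2 (inl b)).

Definition in_circ_block (R S : prel) (w1 w2 : T2) (u : T2) : Prop :=
  match u with inl a => R w1 (inl a) | inr d => S w2 (inr d) end.

Definition circ (R S : prel) : prel := fun u v =>
  u = v \/
  exists w1 w2, circ_line R S w1 w2 /\
    in_circ_block R S w1 w2 u /\ in_circ_block R S w1 w2 v.

End PX.

Definition inverse_semigroup {X : Type} (P : prel X -> Prop)
  (op : prel X -> prel X -> prel X) : Prop :=
  (forall R S, P R -> P S -> P (op R S)) /\
  (forall R S U, P R -> P S -> P U -> req X (op (op R S) U) (op R (op S U))) /\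
  (forall R, P R -> exists S, P S /\
      req X (op (op R S) R) R /\ req X (op (op S R) S) S /\
      forall S', P S' -> req X (op (op R S') R) R -> req X (op (op S' R) S') S' ->
                 req X S' S).

(* Main.v *)
Require Import Defs.
From Stdlib Require Import Relations Relation_Operators FunctionalExtensionality PropExtensionality Classical.

#[local] Arguments Top {X} x.
#[local] Arguments Mid {X} x.
#[local] Arguments Bot {X} x.

Section Main.
Variable X : Type.
Local Notation T2 := (T2 X).
Local Notation rel := (prel X).
Local Notation PX := (isPX X).
Local Notation st := (star X).
Local Notation ci := (circ X).
Local Notation sim := (sim X).
Local Notation pt := (is_point X).
Local Notation gl := (is_genline_at X).
Local Notation pt3 := (is_point3 X).
Local Notation eA := (embA X).
Local Notation eB := (embB X).
Local Notation eC := (embC X).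

Lemma req_eq (R S : rel) : req X R S -> R = S.
Proof.
  intro H. apply functional_extensionality; intro u.
  apply functional_extensionality; intro v. apply propositional_extensionality. apply H.
Qed.

Lemma PX_refl R : PX R -> forall u, R u u.
Proof. intros [[Hr _ _] _]. apply Hr. Qed.
Lemma PX_sym R : PX R -> forall u v, R u v -> R v u.
Proof. intros [[_ _ Hs] _]. apply Hs. Qed.
Lemma PX_trans R : PX R -> forall u v w, R u v -> R v w -> R u w.
Proof. intros [[_ Ht _] _]. intros u v w; apply Ht. Qed.
Lemma PX_cases R : PX R -> forall u, pt R u \/ gl R u.
Proof. intros [_ H]. apply H. Qed.

Lemma crst_map {A B : Type} (E : A -> A -> Prop) (F : B -> B -> Prop) (f : A -> B) :
  (forall u v, E u v -> clos_refl_sym_trans B F (f u) (f v)) ->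
  forall u v, clos_refl_sym_trans A E u v -> clos_refl_sym_trans B F (f u) (f v).
Proof.
  intros H u v Huv. induction Huv.
  - apply H; auto.
  - apply rst_refl.
  - apply rst_sym; auto.
  - eapply rst_trans; eauto.
Qed.

Lemma sim_refl R S u : sim R S u u.
Proof. apply rst_refl. Qed.
Lemma sim_sym R S u v : sim R S u v -> sim R S v u.
Proof. apply rst_sym. Qed.
Lemma sim_trans R S u v w : sim R S u v -> sim R S v w -> sim R S u w.
Proof. apply rst_trans. Qed.
Lemma sim_A R S p q : R p q -> sim R S (eA p) (eA q).
Proof. intro H. apply rst_step. left. exists p, q. auto. Qed.
Lemma sim_B R S p q : S p q -> sim R S (eB p) (eB q).
Proof. intro H. apply rst_step. right. exists p, q. auto. Qed.

Definition pless R S z := forall w, sim R S z w -> ~ pt3 R S w.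

Lemma pless_mov R S z z' : sim R S z z' -> pless R S z -> pless R S z'.
Proof. intros H P w Hw. apply P. eapply sim_trans; eauto. Qed.

Lemma pless_notA R S z p : pless R S z -> sim R S z (eA p) -> ~ pt R p.
Proof. intros P H Hp. apply (P _ H). left. exists p; auto. Qed.
Lemma pless_notB R S z p : pless R S z -> sim R S z (eB p) -> ~ pt S p.
Proof. intros P H Hp. apply (P _ H). right. exists p; auto. Qed.

Lemma notpt_gl R u : PX R -> ~ pt R u -> gl R u.
Proof. intros HR H. destruct (PX_cases R HR u); tauto. Qed.

Definition side (p : T2) : bool := match p with inl _ => true | inr _ => false end.

Lemma cross R S p : PX R -> PX S -> pless R S (eC p) ->
  exists q, side q <> side p /\ sim R S (eC p) (eC q).
Proof.
  intros HR HS P. destruct p as [a|d].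
  - assert (H1 : gl R (inl a)).
    { apply (notpt_gl _ _ HR). apply (pless_notA _ _ _ _ P). apply sim_refl. }
    destruct H1 as [_ [b Hb]].
    assert (E1 : sim R S (eC (inl a)) (eB (inl b))) by (apply (sim_A R S _ _ Hb)).
    assert (H2 : gl S (inl b)).
    { apply (notpt_gl _ _ HS). apply (pless_notB _ _ _ _ P). exact E1. }
    destruct H2 as [_ [d Hd]].
    exists (inr d). split. simpl; congruence.
    eapply sim_trans. exact E1. apply (sim_B R S _ _ Hd).
  - assert (H1 : gl S (inr d)).
    { apply (notpt_gl _ _ HS). apply (pless_notB _ _ _ _ P). apply sim_refl. }
    destruct H1 as [[b Hb] _].
    assert (E1 : sim R S (eC (inr d)) (eA (inr b))) by (apply (sim_B R S _ _ Hb)).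
    assert (H2 : gl R (inr b)).
    { apply (notpt_gl _ _ HR). apply (pless_notA _ _ _ _ P). exact E1. }
    destruct H2 as [[a Ha] _].
    exists (inl a). split. simpl; congruence.
    eapply sim_trans. exact E1. apply (sim_A R S _ _ Ha).
Qed.

Lemma star_unfold R S u v : st R S u v <-> u = v \/ (sim R S (eC u) (eC v) /\ pless R S (eC u)).
Proof. unfold star, pless. tauto. Qed.

Lemma star_PX R S : PX R -> PX S -> PX (st R S).
Proof.
  intros HR HS. split.
  - constructor.
    + intro u. left; auto.
    + intros u v w H1 H2. apply star_unfold in H1; apply star_unfold in H2; apply star_unfold.
      destruct H1 as [->|[H1 P1]]; auto. destruct H2 as [<-|[H2 P2]]; auto.
      right. split; auto. eapply sim_trans; eauto.
    + intros u v H1. apply star_unfold in H1; apply star_unfold.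
      destruct H1 as [->|[H1 P1]]; auto. right. split. apply sim_sym; auto.
      eapply pless_mov; eauto.
  - intro u. destruct (classic (pless R S (eC u))) as [P|NP].
    + right. destruct (cross R S u HR HS P) as [q [Hq Hs]].
      assert (Hst : st R S u q) by (apply star_unfold; right; auto).
      destruct u as [a|d], q as [a'|d']; simpl in Hq; try congruence.
      * split; [exists a; left; auto | exists d'; auto].
      * split; [exists a'; auto | exists d; left; auto].
    + left. intros v H. apply star_unfold in H. destruct H as [->|[_ P]]; auto. tauto.
Qed.


Definition swap (p : T2) : T2 := match p with inl x => inr x | inr x => inl x end.
Lemma swap_swap p : swap (swap p) = p.
Proof. destruct p; reflexivity. Qed.
Definition tr (R : rel) : rel := fun p q => R (swap p) (swap q).
Lemma tr_tr R : tr (tr R) = R.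
Proof.
  unfold tr. apply functional_extensionality; intro u; apply functional_extensionality; intro v.
  rewrite !swap_swap. reflexivity.
Qed.
Lemma pt_tr R p : pt (tr R) p <-> pt R (swap p).
Proof.
  unfold is_point, tr. split; intros H v Hv.
  - rewrite <- (swap_swap v) in Hv. apply H in Hv. rewrite <- Hv. symmetry; apply swap_swap.
  - apply H in Hv. rewrite <- (swap_swap v), Hv. apply swap_swap.
Qed.
Lemma tr_PX R : PX R -> PX (tr R).
Proof.
  intros HR. split.
  - constructor; unfold tr.
    + intro; apply PX_refl; auto.
    + intros u v w; apply PX_trans; auto.
    + intros u v; apply PX_sym; auto.
  - intro u. destruct (PX_cases R HR (swap u)) as [H|[[a Ha] [b Hb]]].
    + left. apply pt_tr. auto.
    + right. unfold tr. split; [exists b | exists a]; simpl; auto.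
Qed.

Definition flip3 (z : T3 X) : T3 X :=
  match z with Top x => Bot x | Mid x => Mid x | Bot x => Top x end.
Lemma flip3_flip3 z : flip3 (flip3 z) = z.
Proof. destruct z; reflexivity. Qed.
Lemma flipA p : flip3 (eA p) = eB (swap p).
Proof. destruct p; reflexivity. Qed.
Lemma flipB p : flip3 (eB p) = eA (swap p).
Proof. destruct p; reflexivity. Qed.
Lemma flipC p : flip3 (eC p) = eC (swap p).
Proof. destruct p; reflexivity. Qed.

Lemma sim_tr1 R S u v : sim (tr S) (tr R) u v -> sim R S (flip3 u) (flip3 v).
Proof.
  apply crst_map. intros a b [[p [q [-> [-> H]]]]|[p [q [-> [-> H]]]]].
  - rewrite !flipA. apply sim_B. exact H.
  - rewrite !flipB. apply sim_A. exact H.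
Qed.
Lemma sim_tr2 R S u v : sim R S u v -> sim (tr S) (tr R) (flip3 u) (flip3 v).
Proof.
  apply crst_map. intros a b [[p [q [-> [-> H]]]]|[p [q [-> [-> H]]]]].
  - rewrite !flipA. apply sim_B. unfold tr. rewrite !swap_swap. exact H.
  - rewrite !flipB. apply sim_A. unfold tr. rewrite !swap_swap. exact H.
Qed.
Lemma sim_tr R S u v : sim (tr S) (tr R) u v <-> sim R S (flip3 u) (flip3 v).
Proof.
  split. apply sim_tr1. intro H. apply sim_tr2 in H. rewrite !flip3_flip3 in H. exact H.
Qed.
Lemma pt3_tr R S w : pt3 (tr S) (tr R) w <-> pt3 R S (flip3 w).
Proof.
  unfold is_point3. split.
  - intros [[p [-> Hp]]|[p [-> Hp]]].
    + right. exists (swap p). rewrite flipA. split; auto. apply pt_tr; auto.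
    + left. exists (swap p). rewrite flipB. split; auto. apply pt_tr; auto.
  - intros [[p [Hw Hp]]|[p [Hw Hp]]].
    + right. exists (swap p). split. rewrite <- (flip3_flip3 w), Hw. apply flipA.
      apply pt_tr. rewrite swap_swap; auto.
    + left. exists (swap p). split. rewrite <- (flip3_flip3 w), Hw. apply flipB.
      apply pt_tr. rewrite swap_swap; auto.
Qed.

Lemma star_tr R S : tr (st R S) = st (tr S) (tr R).
Proof.
  apply req_eq. intros u v. unfold tr at 1. rewrite !star_unfold.
  unfold pless. rewrite sim_tr, !flipC.
  split.
  - intros [H|[H P]]. left. rewrite <- (swap_swap u), H. apply swap_swap.
    right. split; auto. intros w Hw. rewrite pt3_tr. apply P. apply sim_tr in Hw.
    rewrite flipC in Hw. auto.
  - intros [H|[H P]]. left; congruence.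
    right. split; auto. intros w Hw Hp. apply (P (flip3 w)).
    apply sim_tr. rewrite flipC, flip3_flip3. auto. apply pt3_tr. rewrite flip3_flip3; auto.
Qed.


Lemma reach_gen {A : Type} (E : A -> A -> Prop) (P : A -> Prop) (s : A) :
  (forall u v, E u v -> E v u) -> P s ->
  (forall w w', clos_refl_sym_trans A E s w -> P w -> E w w' -> P w') ->
  forall w, clos_refl_sym_trans A E s w -> P w.
Proof.
  intros Hsym Hs Hstep w Hw.
  apply clos_rst_rstn1_iff in Hw. induction Hw as [|y z Hyz Hy IH].
  - exact Hs.
  - apply (Hstep y z). apply clos_rst_rstn1_iff; exact Hy. exact IH.
    destruct Hyz; auto.
Qed.

Inductive T4 : Type := L0 (x : X) | L1 (x : X) | L2 (x : X) | L3 (x : X).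
Definition e01 (p : T2) : T4 := match p with inl x => L0 x | inr x => L1 x end.
Definition e12 (p : T2) : T4 := match p with inl x => L1 x | inr x => L2 x end.
Definition e23 (p : T2) : T4 := match p with inl x => L2 x | inr x => L3 x end.
Definition e03 (p : T2) : T4 := match p with inl x => L0 x | inr x => L3 x end.
Definition rel4 (R S U : rel) (u v : T4) : Prop :=
  (exists p q, u = e01 p /\ v = e01 q /\ R p q) \/
  (exists p q, u = e12 p /\ v = e12 q /\ S p q) \/
  (exists p q, u = e23 p /\ v = e23 q /\ U p q).
Definition sim4 R S U := clos_refl_sym_trans T4 (rel4 R S U).
Definition pt4 R S U (w : T4) : Prop :=
  (exists p, w = e01 p /\ pt R p) \/ (exists p, w = e12 p /\ pt S p) \/
  (exists p, w = e23 p /\ pt U p).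
Definition four R S U : rel := fun u v =>
  u = v \/ (sim4 R S U (e03 u) (e03 v) /\ forall w, sim4 R S U (e03 u) w -> ~ pt4 R S U w).

Definition iota (z : T3 X) : T4 := match z with Top x => L0 x | Mid x => L1 x | Bot x => L2 x end.
Definition kappa (z : T3 X) : T4 := match z with Top x => L0 x | Mid x => L2 x | Bot x => L3 x end.

Lemma iota_eA p : iota (eA p) = e01 p. Proof. destruct p; reflexivity. Qed.
Lemma iota_eB p : iota (eB p) = e12 p. Proof. destruct p; reflexivity. Qed.
Lemma iota_eC p : iota (eC p) = kappa (eA p). Proof. destruct p; reflexivity. Qed.
Lemma kappa_eB p : kappa (eB p) = e23 p. Proof. destruct p; reflexivity. Qed.
Lemma kappa_eC p : kappa (eC p) = e03 p. Proof. destruct p; reflexivity. Qed.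

Lemma iota_inv01 y p : iota y = e01 p -> y = eA p.
Proof. intro H; destruct y, p; simpl in *; inversion H; subst; reflexivity. Qed.
Lemma iota_inv12 y p : iota y = e12 p -> y = eB p.
Proof. intro H; destruct y, p; simpl in *; inversion H; subst; reflexivity. Qed.
Lemma iota_inv23 y p : iota y = e23 p -> exists b, p = inl b /\ y = Bot b.
Proof. intro H; destruct y, p; simpl in *; inversion H; subst; eauto. Qed.
Lemma iota_L3 y d : iota y <> L3 d.
Proof. destruct y; discriminate. Qed.

Lemma rel4_sym R S U u v : PX R -> PX S -> PX U -> rel4 R S U u v -> rel4 R S U v u.
Proof.
  intros HR HS HU [[p [q [-> [-> H]]]]|[[p [q [-> [-> H]]]]|[p [q [-> [-> H]]]]]].
  - left. exists q, p. split; auto. split; auto. apply PX_sym; auto.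
  - right; left. exists q, p. split; auto. split; auto. apply PX_sym; auto.
  - right; right. exists q, p. split; auto. split; auto. apply PX_sym; auto.
Qed.

Lemma iota_sim R S U y y' : sim R S y y' -> sim4 R S U (iota y) (iota y').
Proof.
  apply crst_map. intros a b [[p [q [-> [-> H]]]]|[p [q [-> [-> H]]]]]; apply rst_step.
  - left. exists p, q. rewrite !iota_eA. auto.
  - right; left. exists p, q. rewrite !iota_eB. auto.
Qed.

Lemma kappa_sim R S U z z' : sim (st R S) U z z' -> sim4 R S U (kappa z) (kappa z').
Proof.
  apply crst_map. intros a b [[p [q [-> [-> H]]]]|[p [q [-> [-> H]]]]].
  - apply star_unfold in H. destruct H as [->|[H _]]. apply rst_refl.
    rewrite <- !iota_eC. apply iota_sim. exact H.
  - apply rst_step. right; right. exists p, q. rewrite !kappa_eB. auto.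
Qed.

Lemma pt3_pt4 R S U w : pt3 R S w -> pt4 R S U (iota w).
Proof.
  intros [[p [-> H]]|[p [-> H]]].
  - left. exists p. rewrite iota_eA. auto.
  - right; left. exists p. rewrite iota_eB. auto.
Qed.

Lemma notpless_pt R S p : ~ pless R S (eC p) -> pt (st R S) p.
Proof.
  intros N v H. apply star_unfold in H. destruct H as [->|[_ P]]; auto. tauto.
Qed.

Section ClaimL.
Variables R S U : rel.
Hypotheses (HR : PX R) (HS : PX S) (HU : PX U).
Variable u : T2.

Definition Inv (w : T4) : Prop :=
  (exists d, w = L3 d /\ sim (st R S) U (eC u) (Bot d)) \/
  (exists p y, sim (st R S) U (eC u) (eA p) /\ sim R S (eC p) y /\ w = iota y).

Lemma mid_link z p q : sim (st R S) U z (eA p) -> pless R S (eC p) ->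
  sim R S (eC p) (eC q) -> sim (st R S) U z (eA q).
Proof.
  intros H1 P H2. eapply sim_trans. exact H1. apply sim_A. apply star_unfold. right; auto.
Qed.

Lemma inv_e23 q : sim (st R S) U (eC u) (eB q) -> Inv (e23 q).
Proof.
  intro H. destruct q as [b|d].
  - right. exists (inr b), (Bot b). split. exact H. split. apply sim_refl. reflexivity.
  - left. exists d. split; auto.
Qed.

Lemma inv_start : Inv (e03 u).
Proof.
  unfold Inv. destruct u as [a|d].
  - right. exists (inl a), (Top a). split. apply sim_refl. split. apply sim_refl. reflexivity.
  - left. exists d. split. reflexivity. apply sim_refl.
Qed.

Hypothesis Hpl : forall p, sim (st R S) U (eC u) (eA p) -> pless R S (eC p).

Lemma inv_step w w' : Inv w -> rel4 R S U w w' -> Inv w'.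
Proof.
  intros [[d [-> Hd]]|[p [y [H1 [H2 ->]]]]] Hr.
  - destruct Hr as [[p [q [E [-> H]]]]|[[p [q [E [-> H]]]]|[p [q [E [-> H]]]]]].
    + destruct p; discriminate.
    + destruct p; discriminate.
    + destruct p; simpl in E; try discriminate. inversion E; subst.
      apply inv_e23. eapply sim_trans. exact Hd. apply (sim_B _ _ (inr x) q H).
  - destruct Hr as [[p1 [q [E [-> H]]]]|[[p1 [q [E [-> H]]]]|[p1 [q [E [-> H]]]]]].
    + apply iota_inv01 in E. subst y. right. exists p, (eA q). split; auto. split.
      eapply sim_trans. exact H2. apply sim_A; auto. symmetry; apply iota_eA.
    + apply iota_inv12 in E. subst y. right. exists p, (eB q). split; auto. split.
      eapply sim_trans. exact H2. apply sim_B; auto. symmetry; apply iota_eB.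
    + apply iota_inv23 in E. destruct E as [b [-> ->]].
      apply inv_e23. assert (M : sim (st R S) U (eC u) (eA (inr b))).
      { apply (mid_link _ p). auto. apply Hpl; auto. exact H2. }
      eapply sim_trans. exact M. apply (sim_B _ _ (inl b) q H).
Qed.

Lemma inv_all w : sim4 R S U (e03 u) w -> Inv w.
Proof.
  apply reach_gen. intros; apply rel4_sym; auto. apply inv_start.
  intros w0 w1 _ H1 H2. eapply inv_step; eauto.
Qed.

End ClaimL.

Lemma claimL R S U : PX R -> PX S -> PX U -> st (st R S) U = four R S U.
Proof.
  intros HR HS HU. apply req_eq. intros u v. rewrite star_unfold. unfold four. split.
  - intros [E|[Hs P]]. left; auto. right.
    assert (Hpl : forall p, sim (st R S) U (eC u) (eA p) -> pless R S (eC p)).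
    { intros p Hp. destruct (classic (pless R S (eC p))) as [Y|N]; auto. exfalso.
      apply (P _ Hp). left. exists p. split; auto. apply notpless_pt; auto. }
    split.
    + rewrite <- !kappa_eC. apply kappa_sim. exact Hs.
    + intros w Hw Hp. apply (inv_all R S U HR HS HU u Hpl) in Hw.
      destruct Hw as [[d [-> Hd]]|[p [y [H1 [H2 ->]]]]].
      * destruct Hp as [[p [E _]]|[[p [E _]]|[p [E Hp]]]]; try (destruct p; discriminate).
        destruct p; simpl in E; try discriminate. inversion E; subst.
        apply (P _ Hd). right. exists (inr x). auto.
      * assert (PL := Hpl p H1).
        destruct Hp as [[p1 [E Hp]]|[[p1 [E Hp]]|[p1 [E Hp]]]].
        -- apply iota_inv01 in E. subst y. apply (PL _ H2). left. exists p1; auto.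
        -- apply iota_inv12 in E. subst y. apply (PL _ H2). right. exists p1; auto.
        -- apply iota_inv23 in E. destruct E as [b [-> ->]].
           assert (M : sim (st R S) U (eC u) (eA (inr b))).
           { apply (mid_link R S U _ p). auto. auto. exact H2. }
           apply (P _ M). right. exists (inl b). auto.
  - intros [E|[Hs P]]. left; auto. right.
    assert (Hpl : forall p, sim (st R S) U (eC u) (eA p) -> pless R S (eC p)).
    { intros p Hp w Hw Hpt. apply (P (iota w)).
      eapply rst_trans. rewrite <- kappa_eC. apply kappa_sim. exact Hp.
      rewrite <- iota_eC. apply iota_sim. exact Hw. apply pt3_pt4. exact Hpt. }
    assert (Iv := inv_all R S U HR HS HU u Hpl _ Hs). split.
    + destruct v as [a|d].
      * destruct Iv as [[d [E _]]|[p [y [H1 [H2 E]]]]]. discriminate.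
        simpl in E. destruct y; simpl in E; try discriminate. inversion E; subst.
        change (eC (inl x)) with (eA (inl x)).
        apply (mid_link R S U _ p (inl x)); auto.
      * destruct Iv as [[d' [E H]]|[p [y [H1 [H2 E]]]]].
        inversion E; subst. exact H.
        exfalso. symmetry in E. apply (iota_L3 _ _ E).
    + intros w Hw [[p [-> Hp]]|[p [-> Hp]]].
      * assert (PL := Hpl p Hw). destruct (cross R S p HR HS PL) as [q [Hq Hsq]].
        assert (Hpq : st R S p q) by (apply star_unfold; right; auto).
        apply Hp in Hpq. subst q. tauto.
      * apply (P (e23 p)). rewrite <- kappa_eB, <- kappa_eC. apply kappa_sim. exact Hw.
        right; right. exists p. auto.
Qed.


Definition flip4 (w : T4) : T4 :=
  match w with L0 x => L3 x | L1 x => L2 x | L2 x => L1 x | L3 x => L0 x end.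
Lemma flip4_flip4 w : flip4 (flip4 w) = w. Proof. destruct w; reflexivity. Qed.
Lemma flip01 p : flip4 (e01 p) = e23 (swap p). Proof. destruct p; reflexivity. Qed.
Lemma flip12 p : flip4 (e12 p) = e12 (swap p). Proof. destruct p; reflexivity. Qed.
Lemma flip23 p : flip4 (e23 p) = e01 (swap p). Proof. destruct p; reflexivity. Qed.
Lemma flip03 p : flip4 (e03 p) = e03 (swap p). Proof. destruct p; reflexivity. Qed.

Lemma sim4_flip R S U a b : sim4 (tr U) (tr S) (tr R) a b -> sim4 R S U (flip4 a) (flip4 b).
Proof.
  apply crst_map. intros x y Hr; apply rst_step.
  destruct Hr as [[p [q [-> [-> H]]]]|[[p [q [-> [-> H]]]]|[p [q [-> [-> H]]]]]].
  - right; right. exists (swap p), (swap q). rewrite !flip01. auto.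
  - right; left. exists (swap p), (swap q). rewrite !flip12. auto.
  - left. exists (swap p), (swap q). rewrite !flip23. auto.
Qed.
Lemma sim4_flip' R S U a b : sim4 R S U a b -> sim4 (tr U) (tr S) (tr R) (flip4 a) (flip4 b).
Proof.
  intro H. apply sim4_flip. rewrite !tr_tr. exact H.
Qed.
Lemma pt4_flip R S U w : pt4 (tr U) (tr S) (tr R) w -> pt4 R S U (flip4 w).
Proof.
  intros [[p [-> H]]|[[p [-> H]]|[p [-> H]]]]; apply pt_tr in H.
  - right; right. exists (swap p). rewrite flip01. auto.
  - right; left. exists (swap p). rewrite flip12. auto.
  - left. exists (swap p). rewrite flip23. auto.
Qed.
Lemma pt4_flip' R S U w : pt4 R S U w -> pt4 (tr U) (tr S) (tr R) (flip4 w).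
Proof.
  intro H. apply pt4_flip. rewrite !tr_tr. exact H.
Qed.

Lemma four_flip R S U u v : four (tr U) (tr S) (tr R) u v -> four R S U (swap u) (swap v).
Proof.
  intros [->|[Hs P]]. left; auto. right. split.
  - rewrite <- !flip03. apply sim4_flip. exact Hs.
  - intros w Hw Hp. apply (P (flip4 w)).
    + apply sim4_flip' in Hw. rewrite flip03, swap_swap in Hw. exact Hw.
    + apply pt4_flip'. exact Hp.
Qed.

Lemma tr_four R S U : tr (four (tr U) (tr S) (tr R)) = four R S U.
Proof.
  apply req_eq. intros u v. unfold tr at 1. split.
  - intro H. apply four_flip in H. rewrite !swap_swap in H. exact H.
  - intro H. apply four_flip. rewrite !tr_tr. exact H.
Qed.

Lemma star_assoc R S U : PX R -> PX S -> PX U -> st (st R S) U = st R (st S U).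
Proof.
  intros HR HS HU. rewrite claimL by auto.
  rewrite <- (tr_tr (st R (st S U))). rewrite (star_tr R (st S U)), (star_tr S U).
  rewrite claimL by (apply tr_PX; auto). apply eq_sym, tr_four.
Qed.


Definition Copy (p : T2) (w : T4) : Prop := w = e01 p \/ w = e23 p \/ w = e12 (swap p).
Lemma copy01 p q : Copy p (e01 q) -> q = p.
Proof. intros [H|[H|H]]; destruct p, q; simpl in H; inversion H; subst; reflexivity. Qed.
Lemma copy23 p q : Copy p (e23 q) -> q = p.
Proof. intros [H|[H|H]]; destruct p, q; simpl in H; inversion H; subst; reflexivity. Qed.
Lemma copy12 p q : Copy p (e12 q) -> q = swap p.
Proof. intros [H|[H|H]]; destruct p, q; simpl in H; inversion H; subst; reflexivity. Qed.

Lemma invB_all R u : PX R -> forall w, sim4 R (tr R) R (e03 u) w -> exists p, R u p /\ Copy p w.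
Proof.
  intro HR. apply reach_gen.
  - intros; apply rel4_sym; auto; apply tr_PX; auto.
  - exists u. split. apply PX_refl; auto. destruct u; [left|right; left]; reflexivity.
  - intros w w' _ [p [Hup Hc]] Hr.
    destruct Hr as [[p1 [q [E [-> H]]]]|[[p1 [q [E [-> H]]]]|[p1 [q [E [-> H]]]]]]; subst w.
    + apply copy01 in Hc. subst p1. exists q. split. eapply PX_trans; eauto. left; auto.
    + apply copy12 in Hc. subst p1. unfold tr in H. rewrite swap_swap in H.
      exists (swap q). split. eapply PX_trans; eauto. right; right. rewrite swap_swap; auto.
    + apply copy23 in Hc. subst p1. exists q. split. eapply PX_trans; eauto. right; left; auto.
Qed.

Lemma conn_aux R a d : PX R -> R (inl a) (inr d) -> sim4 R (tr R) R (L0 a) (L3 d).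
Proof.
  intros HR H. eapply rst_trans.
  - apply rst_step. left. exists (inl a), (inr d). auto.
  - eapply rst_trans.
    + apply rst_step. right; left. exists (inl d), (inr a). split; auto. split; auto.
      unfold tr; simpl. apply PX_sym; auto.
    + apply rst_step. right; right. exists (inl a), (inr d). auto.
Qed.

Lemma conn R u v : PX R -> R u v -> sim4 R (tr R) R (e03 u) (e03 v).
Proof.
  intros HR H. destruct u as [a|d], v as [a'|d'].
  - apply rst_step. left. exists (inl a), (inl a'). auto.
  - apply conn_aux; auto.
  - apply rst_sym. apply conn_aux; auto. apply PX_sym; auto.
  - apply rst_step. right; right. exists (inr d), (inr d'). auto.
Qed.

Lemma four_inv R : PX R -> four R (tr R) R = R.
Proof.
  intro HR. apply req_eq. intros u v. split.
  - intros [->|[Hs _]]. apply PX_refl; auto.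
    destruct (invB_all R u HR _ Hs) as [p [Hp Hc]].
    destruct v as [a|d].
    + change (e03 (inl a)) with (e01 (inl a)) in Hc. apply copy01 in Hc; subst; auto.
    + change (e03 (inr d)) with (e23 (inr d)) in Hc. apply copy23 in Hc; subst; auto.
  - intro H. destruct (classic (u = v)) as [E|NE]. left; auto. right. split.
    + apply conn; auto.
    + intros w Hw Hpt. destruct (invB_all R u HR _ Hw) as [p [Hp Hc]].
      assert (Hpp : pt R p).
      { destruct Hpt as [[p1 [-> H1]]|[[p1 [-> H1]]|[p1 [-> H1]]]].
        - apply copy01 in Hc; subst; auto.
        - apply copy12 in Hc; subst. apply pt_tr in H1. rewrite tr_tr in H1; auto.
        - apply copy23 in Hc; subst; auto. }
      apply NE. assert (A1 : u = p) by (apply Hpp; apply PX_sym; auto).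
      assert (A2 : v = p).
      { apply Hpp. apply (PX_trans R HR p u v); auto. apply PX_sym; auto. }
      congruence.
Qed.

Lemma star_inv R : PX R -> st (st R (tr R)) R = R.
Proof. intro HR. rewrite claimL; auto using tr_PX. apply four_inv; auto. Qed.


Definition diag (D : rel) : Prop := forall p, pt D p \/ D p (swap p).

Lemma diag_sw D u v : PX D -> diag D -> D u v -> D (swap u) (swap v).
Proof.
  intros HD Hd H. destruct (classic (u = v)) as [->|NE]. apply PX_refl; auto.
  assert (Hu : D u (swap u)).
  { destruct (Hd u) as [P|P]; auto. exfalso. apply NE. symmetry. apply P. auto. }
  assert (Hv : D v (swap v)).
  { destruct (Hd v) as [P|P]; auto. exfalso. apply NE. apply P. apply PX_sym; auto. }
  apply (PX_trans D HD _ u). apply PX_sym; auto.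
  apply (PX_trans D HD _ v); auto.
Qed.

Lemma diag_sym D : PX D -> diag D -> tr D = D.
Proof.
  intros HD Hd. apply req_eq. intros u v. unfold tr. split; intro H.
  - apply (diag_sw D) in H; auto. rewrite !swap_swap in H. exact H.
  - apply diag_sw; auto.
Qed.

Lemma diag_xxT R : PX R -> diag (st R (tr R)).
Proof.
  intros HR p. destruct (classic (pless R (tr R) (eC p))) as [P|N].
  2: { left. apply notpless_pt. exact N. }
  right. apply star_unfold. right. split; auto. destruct p as [a|a].
  - assert (G : gl R (inl a)).
    { apply (notpt_gl _ _ HR). apply (pless_notA _ _ _ _ P). apply sim_refl. }
    destruct G as [_ [b Hb]].
    apply (sim_trans _ _ _ (eA (inr b))). apply (sim_A _ _ (inl a) (inr b) Hb).
    apply (sim_B _ _ (inl b) (inr a)). unfold tr; simpl. apply PX_sym; auto.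
  - assert (G : gl (tr R) (inr a)).
    { apply (notpt_gl _ _ (tr_PX R HR)). apply (pless_notB _ _ _ _ P). apply sim_refl. }
    destruct G as [[x Hx] _].
    apply (sim_trans _ _ _ (eB (inl x))). apply (sim_B _ _ (inr a) (inl x) Hx).
    apply (sim_A _ _ (inr x) (inl a)). unfold tr in Hx; simpl in Hx. apply PX_sym; auto.
Qed.

Lemma diag_mul D E : PX D -> PX E -> diag D -> diag E -> diag (st D E).
Proof.
  intros HD HE Dd De p. destruct (classic (pless D E (eC p))) as [P|N].
  2: { left. apply notpless_pt. exact N. }
  right. apply star_unfold. right. split; auto. destruct p as [a|a].
  - assert (H1 : D (inl a) (inr a)).
    { destruct (Dd (inl a)) as [Q|Q]; auto. exfalso.
      apply (pless_notA _ _ _ (inl a) P (sim_refl _ _ _) Q). }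
    assert (S1 : sim D E (eC (inl a)) (eB (inl a))) by apply (sim_A _ _ (inl a) (inr a) H1).
    assert (H2 : E (inl a) (inr a)).
    { destruct (De (inl a)) as [Q|Q]; auto. exfalso. apply (pless_notB _ _ _ _ P S1 Q). }
    apply (sim_trans _ _ _ _ _ S1). apply (sim_B _ _ (inl a) (inr a) H2).
  - assert (H1 : E (inr a) (inl a)).
    { destruct (De (inr a)) as [Q|Q]; auto. exfalso.
      apply (pless_notB _ _ _ (inr a) P (sim_refl _ _ _) Q). }
    assert (S1 : sim D E (eC (inr a)) (eA (inr a))) by apply (sim_B _ _ (inr a) (inl a) H1).
    assert (H2 : D (inr a) (inl a)).
    { destruct (Dd (inr a)) as [Q|Q]; auto. exfalso. apply (pless_notA _ _ _ _ P S1 Q). }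
    apply (sim_trans _ _ _ _ _ S1). apply (sim_A _ _ (inr a) (inl a) H2).
Qed.

Lemma diag_comm D E : PX D -> PX E -> diag D -> diag E -> st D E = st E D.
Proof.
  intros HD HE Dd De.
  rewrite <- (tr_tr (st D E)), star_tr, (diag_sym D), (diag_sym E); auto.
  apply diag_sym. apply star_PX; auto. apply diag_mul; auto.
Qed.

Lemma idem_diag e : PX e -> st e e = e -> diag e.
Proof.
  intros He Hee.
  assert (Ht : st (tr e) (tr e) = tr e) by (rewrite <- star_tr, Hee; reflexivity).
  assert (E : st (st e (tr e)) (st (tr e) e) = e).
  { rewrite <- star_assoc by auto using star_PX, tr_PX.
    rewrite (star_assoc e (tr e) (tr e)) by auto using tr_PX.
    rewrite Ht. apply star_inv; auto. }
  rewrite <- E. apply diag_mul; auto using star_PX, tr_PX.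
  apply diag_xxT; auto.
  pattern e at 2. rewrite <- (tr_tr e). apply diag_xxT; auto using tr_PX.
Qed.

End Main.

Section Abs.
Variable T : Type.
Variable P : T -> Prop.
Variable m : T -> T -> T.
Hypothesis Pm : forall a b, P a -> P b -> P (m a b).
Hypothesis As : forall a b c, P a -> P b -> P c -> m (m a b) c = m a (m b c).
Hypothesis Cm : forall e f, P e -> P f -> m e e = e -> m f f = f -> m e f = m f e.

Lemma uniq_inv a x y : P a -> P x -> P y -> m (m a x) a = a -> m (m x a) x = x ->
  m (m a y) a = a -> m (m y a) y = y -> x = y.
Proof.
  intros Pa Px Py Hx1 Hx2 Hy1 Hy2.
  assert (I1 : forall x, P x -> m (m x a) x = x -> m (m x a) (m x a) = m x a).
  { intros z Pz H. rewrite <- (As (m z a) z a) by auto. rewrite H; auto. }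
  assert (I2 : forall x, P x -> m (m x a) x = x -> m (m a x) (m a x) = m a x).
  { intros z Pz H. rewrite (As a z (m a z)) by auto. rewrite <- (As z a z) by auto.
    rewrite H; auto. }
  assert (K1 : forall x y, P x -> P y -> m (m a y) a = a -> m (m x a) (m y a) = m x a).
  { intros z w Pz Pw H. rewrite <- (As (m z a) w a) by auto. rewrite (As z a w) by auto.
    rewrite (As z (m a w) a) by auto. rewrite H. reflexivity. }
  assert (K2 : forall x y, P x -> P y -> m (m a y) a = a -> m (m a y) (m a x) = m a x).
  { intros z w Pz Pw H. rewrite <- (As (m a w) a z) by auto. rewrite H. reflexivity. }
  assert (XA : m x a = m y a).
  { rewrite <- (K1 x y), (Cm (m x a) (m y a)), (K1 y x); auto. }
  assert (AX : m a x = m a y).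
  { rewrite <- (K2 y x), (Cm (m a x) (m a y)), (K2 x y); auto. }
  rewrite <- Hx2, XA, (As y a x), AX, <- (As y a y), Hy2; auto.
Qed.
End Abs.

Section Circ.
Variable X : Type.
Local Notation T2 := (T2 X).
Local Notation rel := (prel X).
Local Notation PX := (isPX X).
Local Notation ci := (circ X).
Local Notation pt := (is_point X).
Local Notation gl := (is_genline_at X).
Local Notation tr := (tr X).

Definition inAB (A B : X -> Prop) (u : T2) : Prop :=
  match u with inl a => A a | inr d => B d end.
Definition lines (R : rel) (A B : X -> Prop) : Prop :=
  exists w, gl R w /\ A = (fun a => R w (inl a)) /\ B = (fun b => R w (inr b)).

Lemma fext_iff (f g : X -> Prop) : (forall x, f x <-> g x) -> f = g.
Proof.
  intro H. apply functional_extensionality; intro x. apply propositional_extensionality; auto.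
Qed.

Lemma inAB_R (R : rel) w u : inAB (fun a => R w (inl a)) (fun b => R w (inr b)) u <-> R w u.
Proof. destruct u; simpl; tauto. Qed.

Lemma circ_char R S u v : ci R S u v <->
  u = v \/ exists A B D, lines R A B /\ lines S B D /\ inAB A D u /\ inAB A D v.
Proof.
  unfold circ. split.
  - intros [E|[w1 [w2 [[G1 [G2 Hiff]] [Iu Iv]]]]]. left; auto. right.
    exists (fun a => R w1 (inl a)), (fun b => R w1 (inr b)), (fun d => S w2 (inr d)).
    split. exists w1. auto. split. exists w2. split; auto. split; auto. apply fext_iff. auto.
    split; [destruct u|destruct v]; simpl in *; auto.
  - intros [E|[A [B [D [[w1 [G1 [-> ->]]] [[w2 [G2 [EB ->]]] [Iu Iv]]]]]]]. left; auto. right.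
    exists w1, w2. split. split; auto. split; auto. intro b.
    assert (Eb := f_equal (fun f => f b) EB). simpl in Eb. rewrite Eb. tauto.
    split; [destruct u|destruct v]; simpl in *; auto.
Qed.

Lemma lines_unique R A B A' B' u : PX R -> lines R A B -> lines R A' B' ->
  inAB A B u -> inAB A' B' u -> A = A' /\ B = B'.
Proof.
  intros HR [w [_ [-> ->]]] [w' [_ [-> ->]]] H1 H2.
  apply inAB_R in H1. apply inAB_R in H2.
  assert (Hw : R w w') by (apply (PX_trans X R HR _ u); auto; apply PX_sym; auto).
  split; apply fext_iff; intro x; split; intro H.
  - apply (PX_trans X R HR _ w); auto. apply PX_sym; auto.
  - apply (PX_trans X R HR _ w'); auto.
  - apply (PX_trans X R HR _ w); auto. apply PX_sym; auto.
  - apply (PX_trans X R HR _ w'); auto.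
Qed.

Lemma lines_ne R A B : lines R A B -> (exists a, A a) /\ (exists b, B b).
Proof.
  intros [w [[[a Ha] [b Hb]] [-> ->]]]. split; eauto.
Qed.

Lemma PX_char R u v : PX R ->
  (R u v <-> u = v \/ exists A B, lines R A B /\ inAB A B u /\ inAB A B v).
Proof.
  intro HR. split.
  - intro H. destruct (classic (u = v)) as [E|NE]. left; auto. right.
    assert (G : gl R u).
    { apply notpt_gl; auto. intro P. apply NE. symmetry. apply P. auto. }
    exists (fun a => R u (inl a)), (fun b => R u (inr b)). split. exists u. auto.
    split; apply inAB_R; auto. apply PX_refl; auto.
  - intros [->|[A [B [[w [_ [-> ->]]] [H1 H2]]]]]. apply PX_refl; auto.
    apply inAB_R in H1. apply inAB_R in H2.
    apply (PX_trans X R HR _ w); auto. apply PX_sym; auto.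
Qed.

Lemma lines_ext R R' : PX R -> PX R' -> (forall A B, lines R A B <-> lines R' A B) -> R = R'.
Proof.
  intros HR HR' H. apply req_eq. intros u v. rewrite (PX_char R), (PX_char R'); auto.
  split; intros [E|[A [B [L [I1 I2]]]]]; auto; right; exists A, B; split; auto; apply H; auto.
Qed.

Lemma block_unique R S A B D A' B' D' u : PX R -> PX S ->
  lines R A B -> lines S B D -> lines R A' B' -> lines S B' D' ->
  inAB A D u -> inAB A' D' u -> A = A' /\ B = B' /\ D = D'.
Proof.
  intros HR HS L1 L2 L3 L4 I1 I2. destruct u as [a|d].
  - destruct (lines_unique R A B A' B' (inl a) HR L1 L3 I1 I2) as [-> ->].
    destruct (lines_ne R A' B' L1) as [_ [b Hb]].
    destruct (lines_unique S B' D B' D' (inl b) HS L2 L4 Hb Hb) as [_ ->]. auto.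
  - destruct (lines_unique S B D B' D' (inr d) HS L2 L4 I1 I2) as [-> ->].
    destruct (lines_ne R A B' L1) as [_ [b Hb]].
    destruct (lines_unique R A B' A' B' (inr b) HR L1 L3 Hb Hb) as [-> _]. auto.
Qed.

Lemma block_circ R S A B D u : PX R -> PX S -> lines R A B -> lines S B D -> inAB A D u ->
  forall z, ci R S u z <-> inAB A D z.
Proof.
  intros HR HS L1 L2 Iu z. rewrite circ_char. split.
  - intros [<-|[A' [B' [D' [L3 [L4 [I1 I2]]]]]]]. auto.
    destruct (block_unique R S A B D A' B' D' u HR HS L1 L2 L3 L4 Iu I1) as [-> [-> ->]]. auto.
  - intro H. right. exists A, B, D. auto.
Qed.

Lemma lines_circ R S A D : PX R -> PX S ->
  (lines (ci R S) A D <-> exists B, lines R A B /\ lines S B D).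
Proof.
  intros HR HS. split.
  - intros [w [[[a Ha] [d Hd]] [-> ->]]].
    assert (Hb : exists A0 B0 D0, lines R A0 B0 /\ lines S B0 D0 /\ inAB A0 D0 w).
    { apply circ_char in Hd. destruct Hd as [E|[A0 [B0 [D0 [L1 [L2 [I1 _]]]]]]].
      - subst w. apply circ_char in Ha. destruct Ha as [E|[A0 [B0 [D0 [L1 [L2 [I1 _]]]]]]].
        discriminate. exists A0, B0, D0. auto.
      - exists A0, B0, D0. auto. }
    destruct Hb as [A0 [B0 [D0 [L1 [L2 I]]]]].
    assert (BC := block_circ R S A0 B0 D0 w HR HS L1 L2 I).
    exists B0. split.
    + replace (fun a0 => ci R S w (inl a0)) with A0. auto.
      symmetry. apply fext_iff. intro x. apply (BC (inl x)).
    + replace (fun b => ci R S w (inr b)) with D0. auto.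
      symmetry. apply fext_iff. intro x. apply (BC (inr x)).
  - intros [B [L1 L2]].
    destruct (lines_ne R A B L1) as [[a0 Ha0] _].
    destruct (lines_ne S B D L2) as [_ [d0 Hd0]].
    assert (BC := block_circ R S A B D (inl a0) HR HS L1 L2 Ha0).
    exists (inl a0). split. split.
    + exists a0. apply BC. exact Ha0.
    + exists d0. apply BC. exact Hd0.
    + split; apply fext_iff; intro x; symmetry; [apply (BC (inl x)) | apply (BC (inr x))].
Qed.

Lemma circ_PX R S : PX R -> PX S -> PX (ci R S).
Proof.
  intros HR HS. split.
  - constructor.
    + intro u. left; auto.
    + intros u v w H1 H2. apply circ_char in H1. apply circ_char in H2. apply circ_char.
      destruct H1 as [->|[A [B [D [L1 [L2 [I1 I2]]]]]]]; auto.
      destruct H2 as [<-|[A' [B' [D' [L3 [L4 [I3 I4]]]]]]]. right; exists A, B, D; auto.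
      destruct (block_unique R S A B D A' B' D' v HR HS L1 L2 L3 L4 I2 I3) as [-> [-> ->]].
      right. exists A', B', D'. auto.
    + intros u v H. apply circ_char in H. apply circ_char.
      destruct H as [->|[A [B [D [L1 [L2 [I1 I2]]]]]]]; auto. right; exists A, B, D; auto.
  - intro u. destruct (classic (exists A B D, lines R A B /\ lines S B D /\ inAB A D u))
      as [[A [B [D [L1 [L2 I]]]]]|N].
    + right. destruct (lines_ne R A B L1) as [[a0 Ha0] _].
      destruct (lines_ne S B D L2) as [_ [d0 Hd0]].
      assert (BC := block_circ R S A B D u HR HS L1 L2 I).
      split. exists a0; apply BC; auto. exists d0; apply BC; auto.
    + left. intros v H. apply circ_char in H. destruct H as [->|[A [B [D [L1 [L2 [I1 _]]]]]]]; auto.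
      exfalso. apply N. exists A, B, D. auto.
Qed.

Lemma circ_assoc R S U : PX R -> PX S -> PX U -> ci (ci R S) U = ci R (ci S U).
Proof.
  intros HR HS HU. apply lines_ext; auto using circ_PX. intros A E.
  rewrite !lines_circ; auto using circ_PX. split.
  - intros [D [L1 L2]]. apply lines_circ in L1; auto. destruct L1 as [B [L3 L4]].
    exists B. split; auto. apply lines_circ; eauto.
  - intros [B [L1 L2]]. apply lines_circ in L2; auto. destruct L2 as [D [L3 L4]].
    exists D. split; auto. apply lines_circ; eauto.
Qed.

Lemma lines_tr R A B : lines (tr R) A B <-> lines R B A.
Proof.
  split.
  - intros [w [[[a Ha] [b Hb]] [-> ->]]]. exists (swap X w).
    destruct w; simpl in *; (split; [split; [exists b|exists a]; assumption | split; reflexivity]).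
  - intros [w [[[a Ha] [b Hb]] [-> ->]]]. exists (swap X w).
    destruct w; simpl in *; (split; [split; [exists b|exists a]; assumption | split; reflexivity]).
Qed.

Lemma circ_inv R : PX R -> ci (ci R (tr R)) R = R.
Proof.
  intros HR. apply lines_ext; auto using circ_PX, tr_PX. intros A B.
  rewrite lines_circ; auto using circ_PX, tr_PX. split.
  - intros [D [L1 L2]]. apply lines_circ in L1; auto using tr_PX. destruct L1 as [B1 [L3 L4]].
    rewrite lines_tr in L4. destruct (lines_ne R A B1 L3) as [_ [b Hb]].
    destruct (lines_unique R A B1 D B1 (inr b) HR L3 L4 Hb Hb) as [-> _]. auto.
  - intro L. exists A. split; auto. apply lines_circ; auto using tr_PX. exists B. split; auto.
    apply lines_tr; auto.
Qed.

Lemma circ_uniq R S' : PX R -> PX S' -> ci (ci R S') R = R -> ci (ci S' R) S' = S' -> S' = tr R.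
Proof.
  intros HR HS E1 E2.
  assert (F : forall A B, lines R A B -> lines S' B A).
  { intros A B L0. assert (L := L0). rewrite <- E1 in L.
    apply lines_circ in L; auto using circ_PX.
    destruct L as [D [L1 L2]]. apply lines_circ in L1; auto. destruct L1 as [B1 [L3 L4]].
    destruct (lines_ne R A B L0) as [[a Ha] [b Hb]].
    destruct (lines_unique R A B1 A B (inl a) HR L3 L0 Ha Ha) as [_ ->].
    destruct (lines_unique R D B A B (inr b) HR L2 L0 Hb Hb) as [-> _]. exact L4. }
  apply lines_ext; auto using tr_PX. intros A B. rewrite lines_tr. split.
  - intro L0. assert (L := L0). rewrite <- E2 in L.
    apply lines_circ in L; auto using circ_PX.
    destruct L as [D [L1 L2]]. apply lines_circ in L1; auto. destruct L1 as [A1 [L3 L4]].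
    assert (L5 := F _ _ L4).
    destruct (lines_ne S' A A1 L3) as [[a Ha] [x Hx]].
    destruct (lines_unique S' A A1 D A1 (inr x) HS L3 L5 Hx Hx) as [<- _].
    destruct (lines_unique S' A A1 A B (inl a) HS L3 L0 Ha Ha) as [_ <-]. exact L4.
  - apply F.
Qed.

End Circ.

Lemma req_refl {X : Type} (R : prel X) : req X R R.
Proof. intros u v; tauto. Qed.

Theorem mainTheorem1 : forall X : Type,
  inverse_semigroup (isPX X) (star X) /\ inverse_semigroup (isPX X) (circ X).
Proof.
  intro X. split; unfold inverse_semigroup.
  - split; [|split].
    + intros; apply star_PX; auto.
    + intros R S U HR HS HU. rewrite star_assoc; auto. apply req_refl.
    + intros R HR. exists (tr X R). split. apply tr_PX; auto.
      assert (H2 := star_inv X (tr X R) (tr_PX X R HR)). rewrite tr_tr in H2.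
      split. rewrite star_inv; auto. apply req_refl.
      split. rewrite H2. apply req_refl.
      intros S' HS' E1 E2. apply req_eq in E1. apply req_eq in E2.
      assert (E : S' = tr X R).
      { apply (uniq_inv (prel X) (isPX X) (star X)) with (a := R); auto using tr_PX.
        - intros; apply star_PX; auto.
        - intros; apply star_assoc; auto.
        - intros e f He Hf Hee Hff. apply diag_comm; auto; apply idem_diag; auto.
        - apply star_inv; auto. }
      rewrite E. apply req_refl.
  - split; [|split].
    + intros; apply circ_PX; auto.
    + intros R S U HR HS HU. rewrite circ_assoc; auto. apply req_refl.
    + intros R HR. exists (tr X R). split. apply tr_PX; auto.
      assert (H2 := circ_inv X (tr X R) (tr_PX X R HR)). rewrite tr_tr in H2.
      split. rewrite circ_inv; auto. apply req_refl.
      split. rewrite H2. apply req_refl.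
      intros S' HS' E1 E2. apply req_eq in E1. apply req_eq in E2.
      rewrite (circ_uniq X R S'); auto. apply req_refl.
Qed.
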